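(* Let $G=(V,E)$ be a finite, connected, undirected graph with $n\ge 2$ vertices. Then for every $r>0$, $f_{G,r}\le 1-\frac{1}{n+r}$.
   Context: The Moran process on $G$ with mutant fitness $r>0$ is the Markov chain $(X_i)_{i\ge0}$ whose state $X_i\subseteq V$ is the set of vertices occupied by mutants; every other vertex is occupied by a non-mutant of fitness $1$. Write $W(S)=r|S|+|V\setminus S|$ for the total fitness. Given $X_i=S$, one step is: choose a vertex $x$ with probability $r/W(S)$ if $x\in S$ and $1/W(S)$ if $x\notin S$; then choose a neighbour $y$ of $x$ uniformly at random; set $X_{i+1}=S\cup\{y\}$ if $x\in S$ and $X_{i+1}=S\setminus\{y\}$ if $x\notin S$. Fixation means $X_i=V$ for some $i$. For $x\in V$, $f_{G,r}(x)$ is the probability of fixation when $X_0=\{x\}$, and $f_{G,r}=\frac1n\sum_{x\in V}f_{G,r}(x)$ is the fixation probability when the initial single mutant is placed at a uniformly random vertex. *)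

(* Defs.v *)
From mathcomp Require Import all_boot.
From Stdlib Require Import Reals.
Set Implicit Arguments. Unset Strict Implicit. Unset Printing Implicit Defensive.

Local Open Scope R_scope.


Section Moran.
Variables (T : finType) (e : rel T) (r : R).

Definition deg (x : T) : R := INR #|[set y | e x y]|.

Definition W (S : {set T}) : R := r * INR #|S| + INR #|~: S|.

(* state after x reproduces onto neighbour y *)
Definition next_state (S : {set T}) (x y : T) : {set T} :=
  if x \in S then y |: S else S :\ y.

Definition trans (S S' : {set T}) : R :=
  \big[Rplus/0]_(x : T) \big[Rplus/0]_(y : T | e x y)
     ((if x \in S then r / W S else 1 / W S) * (1 / deg x) *
      (if next_state S x y == S' then 1 else 0)).

(* hit t S = probability that the chain started at S reaches the state V
   (all vertices mutant) at some time i <= t *)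
Fixpoint hit (t : nat) (S : {set T}) : R :=
  match t with
  | O => if S == setT then 1 else 0
  | t'.+1 => if S == setT then 1
             else \big[Rplus/0]_(S' : {set T}) (trans S S' * hit t' S')
  end.

(* p is the fixation probability f_{G,r}(x): the probability that X_i = V
   for some i, i.e. the limit of the probabilities of fixation by time t *)
Definition is_fixation_prob (x : T) (p : R) : Prop :=
  Un_cv (fun t => hit t [set x]) p.

End Moran.

(* Main.v *)
From HB Require Import structures.
Require Import Defs.
From mathcomp Require Import all_boot.
From Stdlib Require Import Reals Lra.
Delimit Scope nat_scope with N.
Local Open Scope R_scope.

HB.instance Definition _ := Monoid.isComLaw.Build R 0 Rplus
  (fun x y z => sym_eq (Rplus_assoc x y z)) Rplus_comm Rplus_0_l.

Lemma sumR_ge0 (I : Type) (s : seq I) (P : pred I) (F : I -> R) :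
  (forall i, P i -> 0 <= F i) -> 0 <= \big[Rplus/0]_(i <- s | P i) F i.
Proof. move=> H; apply: big_ind => //; [lra | move=> *; lra]. Qed.

Lemma sumR_le (I : Type) (s : seq I) (P : pred I) (F G : I -> R) :
  (forall i, P i -> F i <= G i) ->
  \big[Rplus/0]_(i <- s | P i) F i <= \big[Rplus/0]_(i <- s | P i) G i.
Proof. move=> H; apply: big_ind2 => //; [lra | move=> *; lra]. Qed.

Lemma sumR_mull (I : Type) (s : seq I) (P : pred I) (F : I -> R) c :
  \big[Rplus/0]_(i <- s | P i) (c * F i) = c * \big[Rplus/0]_(i <- s | P i) F i.
Proof. by rewrite (big_endo (fun x => c * x) (fun x y => Rmult_plus_distr_l c x y) (Rmult_0_r c)). Qed.

Lemma sumR_const (I : finType) (P : pred I) c :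
  \big[Rplus/0]_(i | P i) c = INR #|P| * c.
Proof.
rewrite -sum1_card (big_morph INR plus_INR (erefl (INR 0))) Rmult_comm -sumR_mull.
by apply: eq_bigr => i _; rewrite /= Rmult_1_r.
Qed.

Lemma sum_ind (U : finType) (k : U) c :
  \big[Rplus/0]_(z : U) (c * (if k == z then 1 else 0)) = c.
Proof.
rewrite (bigD1 k) //= eqxx big1 => [|z /negbTE]; last first.
  by rewrite eq_sym => ->; rewrite Rmult_0_r.
ring.
Qed.
Set Implicit Arguments.

Lemma inv_ge0 x : 0 <= x -> 0 <= / x.
Proof.
move=> /Rle_lt_or_eq_dec [h|<-]; first by apply/Rlt_le/Rinv_0_lt_compat.
rewrite Rinv_0; lra.
Qed.

Lemma W_pos (T : finType) (r : R) (S : {set T}) :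
  0 < r -> (0 < #|T|)%N -> 0 < W r S.
Proof.
move=> hr hT; rewrite /W.
have hc := cardsC S.
case: (posnP #|S|) => h.
  rewrite h /= Rmult_0_r Rplus_0_l; apply: lt_0_INR; apply/ltP.
  by move: hT; rewrite -hc h.
have := pos_INR #|~: S|; have : 0 < INR #|S| by apply: lt_0_INR; apply/ltP.
nra.
Qed.

Lemma deg_card (T : finType) (e : rel T) x :
  deg e x = INR #|(fun y => e x y)|.
Proof. by rewrite /deg; congr INR; apply: eq_card => y; rewrite inE. Qed.

Lemma w_ge0 (T : finType) (r : R) (S : {set T}) x : 0 < r -> (0 < #|T|)%N ->
  0 <= (if x \in S then r / W r S else 1 / W r S).
Proof.
move=> hr hT; have := W_pos S hr hT => hW.
case: ifP => _; apply: Rle_mult_inv_pos; lra.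
Qed.

Lemma trans_ge0 (T : finType) (e : rel T) (r : R) (S S' : {set T}) :
  0 < r -> (0 < #|T|)%N -> 0 <= trans e r S S'.
Proof.
move=> hr hT; apply: sumR_ge0 => x _; apply: sumR_ge0 => y _.
apply: Rmult_le_pos; last by case: ifP => _; lra.
apply: Rmult_le_pos; first exact: w_ge0.
rewrite /Rdiv Rmult_1_l; apply: inv_ge0; exact: pos_INR.
Qed.

Lemma sum_trans_le1 (T : finType) (e : rel T) (r : R) (S : {set T}) :
  0 < r -> (0 < #|T|)%N -> \big[Rplus/0]_(S' : {set T}) trans e r S S' <= 1.
Proof.
move=> hr hT.
have hW := W_pos S hr hT.
rewrite /trans.
under eq_bigr => S' _ do under eq_bigr => x _ do rewrite big_mkcond.
rewrite exchange_big /=.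
under eq_bigr => x _ do rewrite exchange_big /=.
apply: (Rle_trans _ (\big[Rplus/0]_(x : T) (if x \in S then r / W r S else 1 / W r S))).
  apply: sumR_le => x _.
  under eq_bigr => y _.
    have -> : \big[Rplus/0]_(S' : {set T})
        (if e x y then (if x \in S then r / W r S else 1 / W r S) * (1 / deg e x) *
          (if next_state S x y == S' then 1 else 0) else 0) =
        (if e x y then (if x \in S then r / W r S else 1 / W r S) * (1 / deg e x) else 0).
      case: (e x y); first by rewrite sum_ind.
      by rewrite big1.
    over.
  rewrite -big_mkcond /= sumR_const -deg_card.
  have := w_ge0 S x hr hT.
  set w := (if x \in S then _ else _).
  have := pos_INR #|[set y | e x y]|; rewrite /deg.
  set d := INR _.
  move=> hd hw.
  case: (Rle_lt_or_eq_dec _ _ hd) => hd'.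
    right; field; lra.
  rewrite -hd' Rmult_0_l; exact: hw.
right.
rewrite (bigID (fun x => x \in S)) /=.
rewrite [X in X + _](eq_bigr (fun _ => r / W r S)); last by move=> x ->.
rewrite [X in _ + X](eq_bigr (fun _ => 1 / W r S)); last by move=> x hx; rewrite (negbTE hx).
rewrite !sumR_const.
have -> : #|(fun x => x \in S)| = #|S| by apply: eq_card.
have -> : #|(fun x => ~~ (x \in S))| = #|~: S| by apply: eq_card => x; rewrite inE.
move: hW; rewrite /W => hW; field; lra.
Qed.

Lemma hit_bounds (T : finType) (e : rel T) (r : R) :
  0 < r -> (0 < #|T|)%N -> forall t S, 0 <= hit e r t S <= 1.
Proof.
move=> hr hT; elim=> [|t IH] S /=; first by case: ifP => _; lra.
case: ifP => _; first lra.
split.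
  apply: sumR_ge0 => S' _; apply: Rmult_le_pos; [exact: trans_ge0 | exact: (proj1 (IH S'))].
apply: Rle_trans (sum_trans_le1 e S hr hT).
apply: sumR_le => S' _.
have := trans_ge0 e S S' hr hT; have := IH S'; nra.
Qed.

Lemma hit_set0 (T : finType) (e : rel T) (r : R) :
  (0 < #|T|)%N -> forall t, hit e r t set0 = 0.
Proof.
move=> hT.
have hne : (set0 : {set T}) == setT = false.
  case/card_gt0P: hT => x _.
  apply/eqP => h; have := in_setT x; by rewrite -h inE.
elim=> [|t IH] /=; rewrite hne //.
apply: big1 => S' _.
case: (eqVneq S' set0) => [->|hS']; first by rewrite IH Rmult_0_r.
have -> : trans e r set0 S' = 0; last by rewrite Rmult_0_l.
rewrite /trans big1 // => x _; rewrite big1 // => y _.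
rewrite /next_state in_set0 set0D.
by rewrite eq_sym (negbTE hS') Rmult_0_r.
Qed.

Lemma cv_le (u : nat -> R) l b : Un_cv u l -> (forall t, u t <= b) -> l <= b.
Proof.
move=> hu hb; apply: Rnot_lt_le => h.
have [N HN] := hu (l - b) ltac:(lra).
have := HN N (le_n N); rewrite /R_dist => /Rabs_def2 [h1 h2].
have := hb N; lra.
Qed.

Lemma split3 (U : finType) (g : U -> R) (a b : U) : a != b ->
  \big[Rplus/0]_(z : U) g z =
  g a + (g b + \big[Rplus/0]_(z | (z != a) && (z != b)) g z).
Proof. by move=> hab; rewrite (bigD1 a) //= (bigD1 b) //= eq_sym. Qed.

Lemma hit_x (T : finType) (e : rel T) (r : R) (x : T) :
  0 < r -> (2 <= #|T|)%N -> forall t,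
  hit e r t [set x] <= 1 - trans e r [set x] set0.
Proof.
move=> hr h2.
have hT : (0 < #|T|)%N by apply: leq_trans h2.
have hxT : [set x] == setT = false.
  apply/eqP => h; move: h2; by rewrite -cardsT -h cards1.
have hx0 : [set x] != set0 by apply/set0Pn; exists x; rewrite inE.
have hsum := sum_trans_le1 e [set x] hr hT.
rewrite (@split3 _ _ _ _ hx0) in hsum.
set c := trans e r [set x] [set x] in hsum *.
set a := trans e r [set x] set0 in hsum *.
set R2 := \big[Rplus/0]_(z | _) _ in hsum.
have hc : 0 <= c by apply: trans_ge0.
have ha : 0 <= a by apply: trans_ge0.
have hR2 : 0 <= R2 by apply: sumR_ge0 => *; apply: trans_ge0.
elim=> [|t IH] /=; rewrite hxT; first lra.
rewrite (@split3 _ _ _ _ hx0) hit_set0 //.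
set R1 := \big[Rplus/0]_(z | _) _.
have : R1 <= R2.
  apply: sumR_le => S' _.
  have := hit_bounds e hr hT t S'; have := trans_ge0 e [set x] S' hr hT; nra.
rewrite -/c -/a.
nra.
Qed.

Lemma deg_pos (T : finType) (e : rel T) (x : T) :
  (forall x y : T, connect e x y) -> (2 <= #|T|)%N -> 0 < deg e x.
Proof.
move=> hc h2.
have : (0 < #|[set~ x]|)%N by rewrite cardsC1 -ltnS prednK // (leq_trans _ h2).
case/card_gt0P => z; rewrite !inE => hzx.
have /connectP [p hp hl] := hc x z.
case: p hp hl => [|y p] /=; first by move=> _ hz; rewrite hz eqxx in hzx.
case/andP => hxy _ _.
rewrite /deg; apply: lt_0_INR; apply/ltP; apply/card_gt0P; exists y; by rewrite inE.
Qed.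

Lemma a_lower (T : finType) (e : rel T) (r : R) (x : T) :
  irreflexive e -> 0 < r -> (2 <= #|T|)%N ->
  \big[Rplus/0]_(x' : T) \big[Rplus/0]_(y | e x' y)
     (/(INR #|T| + r) * (1 / deg e x') * (if y == x then 1 else 0))
  <= trans e r [set x] set0.
Proof.
move=> hirr hr h2.
have hT : (0 < #|T|)%N by apply: leq_trans h2.
apply: sumR_le => x' _; apply: sumR_le => y hy.
have hd : 0 <= 1 / deg e x' by rewrite /Rdiv Rmult_1_l; apply: inv_ge0; apply: pos_INR.
case: (eqVneq y x) => [hyx|hyx].
  subst y.
  have hx' : x' \in [set x] = false.
    rewrite inE; apply/negbTE/eqP => hxx; by rewrite hxx hirr in hy.
  rewrite /next_state hx' setDv eqxx !Rmult_1_r.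
  apply: Rmult_le_compat_r => //.
  have hW := W_pos [set x] hr hT.
  rewrite /Rdiv Rmult_1_l; apply: Rinv_le_contravar => //.
  rewrite /W cards1 cardsC1 Rmult_1_r.
  have : INR #|T|.-1 <= INR #|T| by apply: le_INR; apply/leP; apply: leq_pred.
  lra.
rewrite Rmult_0_r.
apply: Rmult_le_pos; last by case: ifP => _; lra.
apply: Rmult_le_pos => //; exact: w_ge0.
Qed.

Lemma lb_sum (T : finType) (e : rel T) (r : R) :
  (forall x y : T, connect e x y) -> 0 < r -> (2 <= #|T|)%N ->
  \big[Rplus/0]_(x : T) \big[Rplus/0]_(x' : T) \big[Rplus/0]_(y | e x' y)
     (/(INR #|T| + r) * (1 / deg e x') * (if y == x then 1 else 0))
  = INR #|T| / (INR #|T| + r).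
Proof.
move=> hc hr h2.
rewrite exchange_big /=.
under eq_bigr => x' _ do rewrite exchange_big /=.
under eq_bigr => x' _.
  under eq_bigr => y _ do rewrite sum_ind.
  rewrite sumR_const -deg_card.
  have hd := @deg_pos _ e x' hc h2.
  have -> : deg e x' * (/ (INR #|T| + r) * (1 / deg e x')) = / (INR #|T| + r) by have := pos_INR #|T|; move=> ?; field; lra.
  over.
rewrite sumR_const.
have -> : #|(fun _ : T => true)| = #|T| by apply: eq_card.
by rewrite /Rdiv.
Qed.

Unset Implicit Arguments.
Local Close Scope R_scope.
Theorem lemma2 (T : finType) (e : rel T)
  (e_sym : symmetric e) (e_irr : irreflexive e)
  (e_conn : forall x y : T, connect e x y)
  (hn : (2 <= #|T|)%N)
  (r : R) (hr : Rlt 0 r)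
  (f : T -> R) (hf : forall x : T, is_fixation_prob e r x (f x)) :
  Rle (Rmult (Rinv (INR #|T|)) (\big[Rplus/R0]_(x : T) f x))
      (Rminus 1 (Rinv (Rplus (INR #|T|) r))).
Proof.
Local Open Scope R_scope.
have hfx : forall x, f x <= 1 - trans e r [set x] set0.
  move=> x; apply: (cv_le (hf x)) => t; exact: hit_x.
have h1 : \big[Rplus/0]_(x : T) f x + \big[Rplus/0]_(x : T) trans e r [set x] set0
          <= INR #|T|.
  rewrite -big_split /=.
  apply: (Rle_trans _ (\big[Rplus/0]_(x : T) 1)).
    apply: sumR_le => x _; have := hfx x; lra.
  rewrite sumR_const Rmult_1_r.
  have -> : #|(fun _ : T => true)| = #|T| by apply: eq_card.
  lra.
have h2 : INR #|T| / (INR #|T| + r) <= \big[Rplus/0]_(x : T) trans e r [set x] set0.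
  rewrite -(@lb_sum _ e r e_conn hr hn).
  apply: sumR_le => x _; exact: a_lower.
have hN : 0 < INR #|T|.
  apply: lt_0_INR; apply/ltP; exact: leq_trans hn.
set S := \big[Rplus/0]_(x : T) f x in h1 *.
apply: (Rle_trans _ (/ INR #|T| * (INR #|T| - INR #|T| / (INR #|T| + r)))).
  apply: Rmult_le_compat_l; first by apply/Rlt_le/Rinv_0_lt_compat.
  lra.
right; field; lra.
Qed.
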